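(* Let $n$ be even with $v_2(n)$ odd. Then $D_{S(n)^*}=C_{S(n)^*}=2$.
   Context: For a natural number $n$, $\mathbb Z_n=\mathbb Z/n\mathbb Z$, $S(n)=\{x^2:x\in\mathbb Z_n\}$, $S(n)^*=S(n)\setminus\{0\}$. For $A\subseteq\mathbb Z_n$, a sequence $(y_1,\dots,y_t)$ ($t\ge1$) in $\mathbb Z_n$ is an $A$-weighted zero-sum sequence if there exist $a_1,\dots,a_t\in A$ with $\sum a_iy_i=0$; a sequence has an $A$-weighted zero-sum subsequence if some nonempty subsequence is an $A$-weighted zero-sum sequence. $D_A(n)$ is the least positive integer $t$ such that every sequence of length $t$ in $\mathbb Z_n$ has an $A$-weighted zero-sum subsequence; $C_A(n)$ is the least positive integer $t$ such that every sequence of length $t$ in $\mathbb Z_n$ has an $A$-weighted zero-sum subsequence consisting of consecutive terms. $D_{S(n)^*}=D_{S(n)^*}(n)$, $C_{S(n)^*}=C_{S(n)^*}(n)$. $v_2(n)$ is the exponent of $2$ in $n$. *)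

(* Defs.v *)
(* Z_n is modelled as 'Z_n; the main theorem's hypotheses
   (n even, v_2(n) odd) force n >= 2, so 'Z_n is genuinely Z/nZ. *)
From mathcomp Require Import all_boot all_order all_algebra.
Set Implicit Arguments. Unset Strict Implicit. Unset Printing Implicit Defensive.
Import GRing.Theory.
Local Open Scope ring_scope.

Definition Ssq (n : nat) : {set 'Z_n} := [set x * x | x : 'Z_n].
Definition Sstar (n : nat) : {set 'Z_n} := Ssq n :\ 0.

Definition wzs (n : nat) (A : {set 'Z_n}) (y : seq 'Z_n) : Prop :=
  (0 < size y)%N /\
  exists a : seq 'Z_n, size a = size y /\ all (fun x => x \in A) a /\
    \sum_(i < size y) a`_i * y`_i = 0.

Definition has_wzs_sub (n : nat) (A : {set 'Z_n}) (y : seq 'Z_n) : Prop :=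
  exists z, subseq z y /\ wzs A z.

Definition has_wzs_cons (n : nat) (A : {set 'Z_n}) (y : seq 'Z_n) : Prop :=
  exists z, infix z y /\ wzs A z.

Definition least_pos_len (n : nat) (P : seq 'Z_n -> Prop) (t : nat) : Prop :=
  (0 < t)%N /\ (forall y : seq 'Z_n, size y = t -> P y) /\
  (forall t', (0 < t' < t)%N -> ~ (forall y : seq 'Z_n, size y = t' -> P y)).

Definition D_is (n : nat) (A : {set 'Z_n}) (t : nat) : Prop :=
  least_pos_len (has_wzs_sub A) t.
Definition C_is (n : nat) (A : {set 'Z_n}) (t : nat) : Prop :=
  least_pos_len (has_wzs_cons A) t.

(* Main.v *)
Require Import Defs.
From mathcomp Require Import all_boot all_order all_algebra.
From mathcomp Require Import zify.
Import GRing.Theory.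

Section Aux.
Local Open Scope ring_scope.

Lemma natZ0 (n k : nat) : (1 < n)%N -> ((k%:R : 'Z_n) = 0) <-> (n %| k)%N.
Proof.
move=> n1; split => [H|H].
  have := congr1 (@nat_of_ord _) H; rewrite val_Zp_nat //= => E.
  by rewrite /dvdn E.
by apply: ord_inj; rewrite val_Zp_nat //= (eqP H); case: (n) n1 => [|[]].
Qed.

Lemma valR (n : nat) (x : 'Z_n) : (1 < n)%N -> ((val x)%:R : 'Z_n) = x.
Proof.
move=> n1; apply: ord_inj; rewrite val_Zp_nat // modn_small //.
by have := ltn_ord x; rewrite [X in (_ < X)%N -> _]Zp_cast.
Qed.

Lemma wzs1 (n : nat) (A : {set 'Z_n}) (a x : 'Z_n) :
  a \in A -> a * x = 0 -> wzs A [:: x].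
Proof.
move=> aA H; split => //; exists [:: a]; split => //; split.
  by rewrite /= aA.
by rewrite big_ord1.
Qed.

Lemma wzs2 (n : nat) (A : {set 'Z_n}) (a x y : 'Z_n) :
  a \in A -> a * x + a * y = 0 -> wzs A [:: x; y].
Proof.
move=> aA H; split => //; exists [:: a; a]; split => //; split.
  by rewrite /= aA.
by rewrite !big_ord_recl big_ord0 /= addr0.
Qed.

Lemma no1 (n : nat) (z : seq 'Z_n) : subseq z [:: 1] -> ~ wzs (Sstar n) z.
Proof.
move=> sz [zp [a [sa [aA Hs]]]].
have := size_subseq sz; case: z sz zp sa Hs => [|w [|w' z]] //= sz _ sa Hs _.
have w1 : w = 1 by move: sz; case: (w =P 1).
case: a sa aA Hs => [|b [|]] //= _; rewrite andbT big_ord1 /= w1 mulr1 => bA Hb.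
by move: bA; rewrite Hb /Sstar !inE eqxx.
Qed.

End Aux.

Theorem mainTheorem6 (n : nat) :
  ~~ odd n -> odd (logn 2 n) ->
  D_is (Sstar n) 2 /\ C_is (Sstar n) 2.
Proof.
move=> ev lo.
have n0 : (0 < n)%N by case: (n) lo => //; rewrite logn0.
have n1 : (1 < n)%N by case: (n) n0 ev => [|[]].
set h := n./2.
have nh : n = (h * 2)%N by rewrite /h muln2 even_halfK.
have h0 : (0 < h)%N by move: n0; rewrite nh muln2 double_gt0.
have aS : (h%:R%R : 'Z_n) \in Sstar n.
  case: (pfactor_coprime (isT : prime 2) n0) => m; rewrite coprime2n => om nE.
  have [j kj] : exists j, logn 2 n = j.*2.+1.
    by exists (logn 2 n)./2; rewrite -[in LHS](odd_double_half (logn 2 n)) lo.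
  have [z zE] : exists z, (z * z = h + n * m./2)%N.
    exists (2 ^ j * m)%N.
    move: nE; rewrite kj expnS -muln2 expnM => nE.
    have mE := odd_double_half m; rewrite om /= -muln2 in mE.
    move: nE mE; set P := (2 ^ j)%N; set q := m./2 => nE mE.
    have hE : h = (m * P ^ 2)%N by nia.
    rewrite hE nE -mE; nia.
  rewrite /Sstar !inE; apply/andP; split.
    apply/negP => /eqP /(natZ0 _ _ n1) /dvdn_leq => /(_ h0); rewrite nh.
    move=> H; move: H h0; lia.
  apply/imsetP; exists (z%:R%R) => //.
  by rewrite -natrM zE natrD natrM pchar_Zp // mul0r addr0.
have key : forall x : 'Z_n, ((h%:R * x = 0)%R) <-> ~~ odd (val x).
  move=> x; rewrite -(@valR _ x n1) -natrM natZ0 // valR //.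
  have E : forall v, (n %| h * v)%N = ~~ odd v.
    by move=> v; rewrite nh dvdn_pmul2l // dvdn2.
  by rewrite E.
have C2 : forall y : seq 'Z_n, size y = 2%N -> has_wzs_cons (Sstar n) y.
  case=> [|x [|y []]] // _.
  case ox: (odd (val x)); last first.
    exists [:: x]; split; first by rewrite (prefix_infix [:: x] [:: y]).
    by apply: (@wzs1 _ _ _ _ aS); apply/key; rewrite ox.
  case oy: (odd (val y)); last first.
    exists [:: y]; split; first by rewrite (suffix_infix [:: x] [:: y]).
    by apply: (@wzs1 _ _ _ _ aS); apply/key; rewrite oy.
  exists [:: x; y]; split; first by rewrite infix_refl.
  apply: (@wzs2 _ _ _ _ _ aS); rewrite -mulrDr; apply/key.
  rewrite -(@valR _ x n1) -(@valR _ y n1) -natrD.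
  have := @val_Zp_nat _ n1 (val x + val y); move=> /= ->.
  have -> : odd ((val x + val y) %% n) = odd (val x + val y).
    move: (val x + val y) => k.
    by rewrite {2}(divn_eq k n) oddD oddM (negbTE ev) andbF.
  by rewrite oddD ox oy.
have nope : forall t', (0 < t' < 2)%N -> forall P : seq 'Z_n -> Prop,
    (forall y, P y -> has_wzs_sub (Sstar n) y) -> ~ (forall y, size y = t' -> P y).
  move=> t' /andP [t1 t2] P HP H.
  have t'1 : t' = 1%N by case: t' t1 t2 H => [|[]].
  subst t'; have [z [sz wz]] := HP _ (H [:: 1%R] erefl).
  exact: (@no1 _ _ sz wz).
split; (split; [done | split]).
- by move=> y /C2 [z [iz wz]]; exists z; split => //; apply: infixW.
- by move=> t' tt; apply: (nope t' tt) => //.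
- exact: C2.
- move=> t' tt; apply: (nope t' tt) => y [z [iz wz]]; exists z; split => //.
  exact: infixW.
Qed.
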